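(* Let $n\geq 2$, $\lambda>n$, $0<\mu<1$, and $h(x,y)=(\lambda x,\mu y)$. Let $f:\mathbb{R}^2\to\mathbb{R}^2$ be an orientation preserving homeomorphism with bounded displacement (there is $K>0$ with $|f(p)-p|\leq K$ for all $p$) such that $hfh^{-1}=f^n$. Then $f=\mathrm{id}$. *)

(* Defs.v *)
From Stdlib Require Import Reals.
Open Scope R_scope.

Definition pt : Type := (R * R)%type.

Definition dist2 (p q : pt) : R :=
  sqrt ((fst p - fst q) ^ 2 + (snd p - snd q) ^ 2).

Definition continuous2 (f : pt -> pt) : Prop :=
  forall p eps, 0 < eps ->
    exists delta, 0 < delta /\
      forall q, dist2 q p < delta -> dist2 (f q) (f p) < eps.

Definition homeomorphism2 (f : pt -> pt) : Prop :=
  exists g : pt -> pt,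
    continuous2 f /\ continuous2 g /\
    (forall p, g (f p) = p) /\ (forall p, f (g p) = p).

(* the loop t |-> f(p + r(cos 2 pi t, sin 2 pi t)), t in [0,1],
   winds exactly once (positively) around f p: there is a continuous
   angle function theta with f(c(t)) - f p = |f(c(t)) - f p| (cos theta t, sin theta t)
   and theta 1 - theta 0 = 2 pi. *)
Definition circle_pt (p : pt) (r t : R) : pt :=
  (fst p + r * cos (2 * PI * t), snd p + r * sin (2 * PI * t)).

Definition winds_once_around (f : pt -> pt) (p : pt) (r : R) : Prop :=
  exists theta : R -> R,
    continuity theta /\
    (forall t, 0 <= t <= 1 ->
       let q := f (circle_pt p r t) in
       fst q - fst (f p) = dist2 q (f p) * cos (theta t) /\
       snd q - snd (f p) = dist2 q (f p) * sin (theta t)) /\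
    theta 1 - theta 0 = 2 * PI.

(* orientation preserving: local degree +1 at every point, i.e. the image
   of every positively oriented small circle around p has winding number 1
   around f p. *)
Definition orientation_preserving2 (f : pt -> pt) : Prop :=
  forall p r, 0 < r -> winds_once_around f p r.

Definition hmap (lam mu : R) (p : pt) : pt := (lam * fst p, mu * snd p).
Definition hinv (lam mu : R) (p : pt) : pt := (fst p / lam, snd p / mu).

(* Main.v *)
Require Import Defs.
From Stdlib Require Import Reals Lra Lia.
Open Scope R_scope.

Lemma Rabs_le_between (x y : R) : Rabs x <= y -> -y <= x <= y.
Proof. intro H. unfold Rabs in H. destruct (Rcase_abs x); lra. Qed.

Lemma abs_snd_le (p q : pt) : Rabs (snd p - snd q) <= dist2 p q.
Proof.
  unfold dist2. rewrite <- sqrt_Rsqr_abs. apply sqrt_le_1_alt.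
  unfold Rsqr. simpl. pose proof (Rle_0_sqr (fst p - fst q)). unfold Rsqr in H. nra.
Qed.

Lemma abs_fst_le (p q : pt) : Rabs (fst p - fst q) <= dist2 p q.
Proof.
  unfold dist2. rewrite <- sqrt_Rsqr_abs. apply sqrt_le_1_alt.
  unfold Rsqr. simpl. pose proof (Rle_0_sqr (snd p - snd q)). unfold Rsqr in H. nra.
Qed.

Lemma dist2_vert (x y y' : R) : dist2 (x, y') (x, y) = Rabs (y' - y).
Proof.
  unfold dist2. simpl. rewrite <- sqrt_Rsqr_abs. f_equal. unfold Rsqr. ring.
Qed.

Lemma line_cont (f : pt -> pt) (x : R) :
  continuous2 f -> continuity (fun z => snd (f (x, z))).
Proof.
  intros Hc y. unfold continuity_pt, continue_in, limit1_in, limit_in. simpl.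
  intros eps Heps. destruct (Hc (x, y) eps Heps) as [d [Hd Hq]].
  exists d. split; [lra|]. intros z [_ Hz]. unfold R_dist in *.
  eapply Rle_lt_trans; [apply abs_snd_le|]. apply Hq. rewrite dist2_vert. exact Hz.
Qed.

Lemma inc_of_inj (phi : R -> R) (K : R) :
  continuity phi -> (forall a b, phi a = phi b -> a = b) ->
  (forall y, Rabs (phi y - y) <= K) ->
  forall a b, a < b -> phi a < phi b.
Proof.
  intros Hc Hi Hb a b Hab.
  destruct (Rtotal_order (phi a) (phi b)) as [H|[H|H]]; auto.
  - apply Hi in H. lra.
  - exfalso. set (c := Rmax b (phi a) + K + 1).
    assert (Hcb : b < c). { unfold c. pose proof (Rmax_l b (phi a)). pose proof (Hb b). pose proof (Rabs_pos (phi b - b)). lra. }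
    assert (Hpc : phi a < phi c). { pose proof (Hb c). apply Rabs_le_between in H0. unfold c in *.
      pose proof (Rmax_r b (phi a)). lra. }
    destruct (IVT (fun t => phi t - phi a) b c) as [z [Hz1 Hz2]].
    + apply continuity_minus; [exact Hc| apply continuity_const; intros ? ?; reflexivity].
    + exact Hcb.
    + lra.
    + lra.
    + assert (phi z = phi a) by lra. apply Hi in H0. lra.
Qed.

Lemma orbit_up (phi : R -> R) (inc : forall a b, a < b -> phi a < phi b) (y : R) :
  y < phi y -> forall m, (1 <= m)%nat -> phi y <= Nat.iter m phi y.
Proof.
  intros Hy.
  assert (S1 : forall m, Nat.iter m phi y < Nat.iter (S m) phi y).
  { induction m. simpl. exact Hy. simpl. apply inc. exact IHm. }
  intros m Hm. induction m. lia.
  destruct m. simpl. lra.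
  pose proof (S1 (S m)). assert (phi y <= Nat.iter (S m) phi y) by (apply IHm; lia). lra.
Qed.

Lemma orbit_down (phi : R -> R) (inc : forall a b, a < b -> phi a < phi b) (y : R) :
  phi y < y -> forall m, (1 <= m)%nat -> Nat.iter m phi y <= phi y.
Proof.
  intros Hy.
  assert (S1 : forall m, Nat.iter (S m) phi y < Nat.iter m phi y).
  { induction m. simpl. exact Hy. simpl. apply inc. exact IHm. }
  intros m Hm. induction m. lia.
  destruct m. simpl. lra.
  pose proof (S1 (S m)). assert (Nat.iter (S m) phi y <= phi y) by (apply IHm; lia). lra.
Qed.

Lemma iter_line (f : pt -> pt) (Hv : forall q, fst (f q) = fst q) (x y : R) m :
  Nat.iter m f (x, y) = (x, Nat.iter m (fun z => snd (f (x, z))) y).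
Proof.
  induction m. reflexivity.
  simpl. rewrite IHm. rewrite (surjective_pairing (f (x, _))). rewrite Hv. reflexivity.
Qed.

Lemma fst_iter (f : pt -> pt) (B : R) :
  (forall q, Rabs (fst (f q) - fst q) <= B) ->
  forall m p, Rabs (fst (Nat.iter m f p) - fst p) <= INR m * B.
Proof.
  intros HB m p. induction m.
  - simpl. replace (fst p - fst p) with 0 by ring. rewrite Rabs_R0. lra.
  - rewrite S_INR. simpl Nat.iter.
    replace (fst (f (Nat.iter m f p)) - fst p) with
      ((fst (f (Nat.iter m f p)) - fst (Nat.iter m f p)) + (fst (Nat.iter m f p) - fst p)) by ring.
    eapply Rle_trans; [apply Rabs_triang|]. pose proof (HB (Nat.iter m f p)). lra.
Qed.

Lemma small_pow (r e : R) : 0 <= r < 1 -> 0 < e -> exists k, r ^ k < e.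
Proof.
  intros Hr He. destruct (pow_lt_1_zero r) with (y := e) as [N HN].
  rewrite Rabs_right; lra. exact He.
  exists N. specialize (HN N (le_n _)). rewrite Rabs_right in HN. exact HN.
  apply Rle_ge. apply pow_le. lra.
Qed.

Theorem lemma3p1 (n : nat) (lam mu : R) (f : pt -> pt) :
  (2 <= n)%nat -> INR n < lam -> 0 < mu < 1 ->
  homeomorphism2 f -> orientation_preserving2 f ->
  (exists K, 0 < K /\ forall p, dist2 (f p) p <= K) ->
  (forall p, hmap lam mu (f (hinv lam mu p)) = Nat.iter n f p) ->
  forall p, f p = p.
Proof.
  intros Hn Hlam Hmu [g [Hcf [_ [Hgf _]]]] _ [K [HK HfK]] Hrel.
  assert (Hn0 : 2 <= INR n). { replace 2 with (INR 2) by (simpl; ring). apply le_INR. exact Hn. }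
  assert (Hlam0 : 0 < lam) by lra.
  assert (Hbnd : forall k q, Rabs (fst (f q) - fst q) <= (INR n / lam) ^ k * K).
  { induction k; intro q.
    - simpl. rewrite Rmult_1_l. eapply Rle_trans; [apply abs_fst_le|]. apply HfK.
    - pose proof (fst_iter f _ IHk n (hmap lam mu q)) as H.
      rewrite <- Hrel in H.
      assert (E : hinv lam mu (hmap lam mu q) = q).
      { unfold hinv, hmap. simpl. rewrite (surjective_pairing q) at 3. f_equal; field; lra. }
      rewrite E in H. unfold hmap in H. simpl fst in H.
      replace (lam * fst (f q) - lam * fst q) with (lam * (fst (f q) - fst q)) in H by ring.
      rewrite Rabs_mult, (Rabs_right lam) in H by lra.
      simpl. apply (Rmult_le_reg_l lam); [lra|].
      replace (lam * (INR n / lam * (INR n / lam) ^ k * K)) with (INR n * ((INR n / lam) ^ k * K)) by (field; lra).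
      exact H. }
  assert (Hv : forall q, fst (f q) = fst q).
  { intro q. destruct (Req_dec (fst (f q)) (fst q)) as [E|E]; auto. exfalso.
    assert (Ha : 0 < Rabs (fst (f q) - fst q)) by (apply Rabs_pos_lt; lra).
    destruct (small_pow (INR n / lam) (Rabs (fst (f q) - fst q) / K)) as [k Hk].
    { split. apply Rle_mult_inv_pos; lra. apply (Rmult_lt_reg_r lam); [lra|].
      field_simplify; lra. }
    { apply Rdiv_lt_0_compat; lra. }
    pose proof (Hbnd k q). apply (Rmult_lt_compat_r K) in Hk; [|lra].
    unfold Rdiv in Hk. rewrite Rmult_assoc, Rinv_l, Rmult_1_r in Hk by lra. lra. }
  assert (Hinj : forall a b, f a = f b -> a = b).
  { intros a b E. rewrite <- (Hgf a), <- (Hgf b), E. reflexivity. }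
  assert (Hinc : forall x, forall a b, a < b -> snd (f (x, a)) < snd (f (x, b))).
  { intro x. apply (inc_of_inj _ K).
    - apply line_cont. exact Hcf.
    - intros a b E. assert (f (x, a) = f (x, b)).
      { rewrite (surjective_pairing (f (x,a))), (surjective_pairing (f (x,b))), !Hv, E. reflexivity. }
      apply Hinj in H. injection H; auto.
    - intro y. eapply Rle_trans; [apply (abs_snd_le (f (x, y)) (x, y))|]. apply HfK. }
  set (b := fun q => snd (f q) - snd q).
  assert (Hb : forall q, Rabs (b q) <= K).
  { intro q. unfold b. eapply Rle_trans; [apply abs_snd_le|]. apply HfK. }
  assert (Hrelb : forall q, mu * b (hinv lam mu q) = snd (Nat.iter n f q) - snd q).
  { intro q. rewrite <- Hrel. unfold b, hmap, hinv. simpl. field. lra. }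
  assert (Hiter : forall q m, snd (Nat.iter m f q) =
     Nat.iter m (fun z => snd (f (fst q, z))) (snd q)).
  { intros q m. rewrite (surjective_pairing q) at 1. rewrite iter_line by exact Hv. reflexivity. }
  assert (Hup : forall q, 0 < b q -> b q <= mu * b (hinv lam mu q)).
  { intros q Hq. rewrite Hrelb, Hiter. unfold b in *.
    pose proof (orbit_up _ (Hinc (fst q)) (snd q)) as O.
    assert (E : snd (f (fst q, snd q)) = snd (f q)) by (rewrite <- surjective_pairing; reflexivity).
    cbv beta in O. rewrite E in O. specialize (O ltac:(lra) n ltac:(lia)). lra. }
  assert (Hdown : forall q, b q < 0 -> mu * b (hinv lam mu q) <= b q).
  { intros q Hq. rewrite Hrelb, Hiter. unfold b in *.
    pose proof (orbit_down _ (Hinc (fst q)) (snd q)) as O.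
    assert (E : snd (f (fst q, snd q)) = snd (f q)) by (rewrite <- surjective_pairing; reflexivity).
    cbv beta in O. rewrite E in O. specialize (O ltac:(lra) n ltac:(lia)). lra. }
  intro p.
  assert (Hb0 : b p = 0).
  { destruct (Rtotal_order (b p) 0) as [H|[H|H]]; auto; exfalso.
    - assert (I : forall k, mu ^ k * b (Nat.iter k (hinv lam mu) p) <= b p).
      { induction k. simpl. lra.
        assert (b (Nat.iter k (hinv lam mu) p) < 0).
        { destruct (Rlt_dec (b (Nat.iter k (hinv lam mu) p)) 0) as [?|N]; auto.
          assert (0 <= mu ^ k) by (apply pow_le; lra). nra. }
        pose proof (Hdown _ H0). simpl. assert (0 <= mu ^ k) by (apply pow_le; lra).
        nra. }
      destruct (small_pow mu (- b p / K)) as [k Hk]; [lra| apply Rdiv_lt_0_compat; lra|].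
      pose proof (I k). pose proof (Hb (Nat.iter k (hinv lam mu) p)).
      apply Rabs_le_between in H1. assert (0 <= mu ^ k) by (apply pow_le; lra).
      apply (Rmult_lt_compat_r K) in Hk; [|lra]. unfold Rdiv in Hk.
      rewrite Rmult_assoc, Rinv_l, Rmult_1_r in Hk by lra. nra.
    - assert (I : forall k, b p <= mu ^ k * b (Nat.iter k (hinv lam mu) p)).
      { induction k. simpl. lra.
        assert (0 < b (Nat.iter k (hinv lam mu) p)).
        { destruct (Rlt_dec 0 (b (Nat.iter k (hinv lam mu) p))) as [?|N]; auto.
          assert (0 <= mu ^ k) by (apply pow_le; lra). nra. }
        pose proof (Hup _ H0). simpl. assert (0 <= mu ^ k) by (apply pow_le; lra).
        nra. }
      destruct (small_pow mu (b p / K)) as [k Hk]; [lra| apply Rdiv_lt_0_compat; lra|].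
      pose proof (I k). pose proof (Hb (Nat.iter k (hinv lam mu) p)).
      apply Rabs_le_between in H1. assert (0 <= mu ^ k) by (apply pow_le; lra).
      apply (Rmult_lt_compat_r K) in Hk; [|lra]. unfold Rdiv in Hk.
      rewrite Rmult_assoc, Rinv_l, Rmult_1_r in Hk by lra. nra. }
  unfold b in Hb0. pose proof (Hv p) as Hf.
  destruct p as [x y]. destruct (f (x, y)) as [u v]. simpl in *. f_equal; lra.
Qed.
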